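(* Let $d\ge2$ and suppose $f:\mathbb{R}^d_+\to\mathbb{R}$ is uniformly continuous with $\mathrm{supp}(f)\subset[0,1]^d$. Let $u,v:\overline{\mathbb{R}^d_+}\to\mathbb{R}$ be continuous, with $u$ a viscosity subsolution and $v$ a viscosity supersolution of \[u_{x_1}\cdots u_{x_d}=f\quad\text{on }\mathbb{R}^d_+,\] and suppose that $u(x)=u(\min(x_1,1),\dots,\min(x_d,1))$ for all $x\in\mathbb{R}^d_+$, and that $v$ is Pareto-monotone. If $u\le v$ on $\partial\mathbb{R}^d_+$, then $u\le v$ on $\mathbb{R}^d_+$.
   Context: $\mathbb{R}^d_+=\{x:x_i>0\ \forall i\}$; $x\leqq y$ means $x_i\le y_i$ for all $i$. A function $v$ is Pareto-monotone if $x\leqq y$ implies $v(x)\le v(y)$. Superdifferential $D^+u(x)$: all $p$ with $u(y)\le u(x)+\langle p,y-x\rangle+o(|y-x|)$ as $y\to x$; subdifferential $D^-u(x)$ defined with $\ge$. A continuous $u$ is a viscosity subsolution of $u_{x_1}\cdots u_{x_d}=f$ on $\mathbb{R}^d_+$ if $p_1\cdots p_d\le f^*(x)$ for all $x\in\mathbb{R}^d_+$, $p\in D^+u(x)$, and a viscosity supersolution if $p_1\cdots p_d\ge f_*(x)$ for all $x\in\mathbb{R}^d_+$, $p\in D^-u(x)$, where $f^*,f_*$ are the upper and lower semicontinuous envelopes of $f$. *)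

(* Defs.v *)
From HB Require Import structures.
From mathcomp Require Import all_boot all_order all_algebra.
From mathcomp Require Import all_classical all_reals all_analysis.
Unset Printing Implicit Defensive.
Import Order.TTheory GRing.Theory Num.Theory numFieldNormedType.Exports.
Local Open Scope classical_set_scope.
Local Open Scope ring_scope.

Section Defs.
Variables (R : realType) (d : nat).
Notation V := 'rV[R]_d.

Definition orthant : set V := [set x | forall i : 'I_d, 0 < x ord0 i].
Definition corthant : set V := [set x | forall i : 'I_d, 0 <= x ord0 i].
Definition borthant : set V := corthant `\` orthant.
Definition unit_cube : set V := [set x | forall i : 'I_d, 0 <= x ord0 i <= 1].

Definition pareto_le (x y : V) : Prop := forall i : 'I_d, x ord0 i <= y ord0 i.

Definition pareto_monotone (A : set V) (v : V -> R) : Prop :=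
  forall x y, A x -> A y -> pareto_le x y -> v x <= v y.

Definition dotv (p q : V) : R := \sum_(i < d) p ord0 i * q ord0 i.
Definition prodv (p : V) : R := \prod_(i < d) p ord0 i.

Definition cap1 (x : V) : V := \row_(i < d) Num.min (x ord0 i) 1.

Definition unif_cont_on (A : set V) (f : V -> R) : Prop :=
  forall e : R, 0 < e -> exists2 δ : R, 0 < δ &
    forall x y, A x -> A y -> `|x - y| < δ -> `|f x - f y| < e.

Definition supp (f : V -> R) : set V := closure [set x | orthant x /\ f x != 0].

Definition superdiff (u : V -> R) (x p : V) : Prop :=
  forall e : R, 0 < e -> \forall y \near x, u y <= u x + dotv p (y - x) + e * `|y - x|.
Definition subdiff (u : V -> R) (x p : V) : Prop :=
  forall e : R, 0 < e -> \forall y \near x, u y >= u x + dotv p (y - x) - e * `|y - x|.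

Definition usc_env (f : V -> R) (x : V) : \bar R :=
  ereal_inf [set ereal_sup [set (f y)%:E | y in orthant `&` ball x r]
            | r in [set r : R | 0 < r]].
Definition lsc_env (f : V -> R) (x : V) : \bar R :=
  ereal_sup [set ereal_inf [set (f y)%:E | y in orthant `&` ball x r]
            | r in [set r : R | 0 < r]].

Definition visc_sub (f u : V -> R) : Prop :=
  forall x p, orthant x -> superdiff u x p -> ((prodv p)%:E <= usc_env f x)%E.
Definition visc_super (f v : V -> R) : Prop :=
  forall x p, orthant x -> subdiff v x p -> ((prodv p)%:E >= lsc_env f x)%E.

End Defs.

(* Main.v *)
Require Import Defs.
From HB Require Import structures.
From mathcomp Require Import all_boot all_order all_algebra.
From mathcomp Require Import all_classical all_reals all_analysis.
From mathcomp Require Import ring lra.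
Import Order.TTheory GRing.Theory Num.Theory numFieldNormedType.Exports.
Local Open Scope classical_set_scope.
Local Open Scope ring_scope.

Lemma fst_cont {X Y : topologicalType} : continuous (@fst X Y).
Proof.
move=> [a b] W /= aW; exists (W, setT) => //=; first by split => //; exact: filterT.
by move=> [? ?] [].
Qed.

Lemma snd_cont {X Y : topologicalType} : continuous (@snd X Y).
Proof.
move=> [a b] W /= aW; exists (setT, W) => //=; first by split => //; exact: filterT.
by move=> [? ?] [].
Qed.

Section S.
Variables (R : realType) (d : nat).
Notation V := 'rV[R]_d.

Lemma norm_coord_le (x : V) i : `|x ord0 i| <= `|x|.
Proof.
rewrite [X in _ <= X]mx_normrE.
exact: (le_bigmax _ (fun ij : 'I_1 * 'I_d => `|x ij.1 ij.2|) (ord0, i)).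
Qed.

Lemma norm_lt_coord (x : V) r : 0 < r -> (forall i, `|x ord0 i| < r) -> `|x| < r.
Proof.
move=> r0 H; rewrite [X in X < _]mx_normrE; apply: bigmax_lt => // -[i j] _.
by rewrite /= (ord1 i); exact: H.
Qed.

Lemma orthant_near (x : V) : orthant R d x -> \forall y \near x, orthant R d y.
Proof.
move=> ox.
suff H : forall i : 'I_d, \forall y \near x, 0 < (y : V) ord0 i.
  exact: (@filter_forall V 'I_d (fun i (y : V) => 0 < y ord0 i) (nbhs x) _ H).
move=> i; apply/nbhs_ballP; exists (x ord0 i) => //=.
move=> y; rewrite -ball_normE /= => xy.
have := le_lt_trans (norm_coord_le _ i) xy; rewrite !mxE.
rewrite ltr_norml => /andP[_]; rewrite ltrBlDl -ltrBlDr subrr //.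
Qed.

Definition capc (c : R) (x : V) : V := \row_i Num.min (x ord0 i) c.
Definition box (c : R) : set V := [set x | forall i, 0 <= x ord0 i <= c].
Definition Pen (b : R) (x y : V) : R := \sum_i (x ord0 i - y ord0 i + b) * (x ord0 i - y ord0 i + b).
Definition Ssum (y : V) : R := \sum_i y ord0 i.

Lemma box_compact c : compact (box c).
Proof.
have Mnco : compact [set v : V | forall i, v ord0 i \in `[0, c]].
  apply: (@rV_compact _  _ (fun=> `[0, c]%classic)).
  by move=> _; apply: segment_compact.
suff -> : box c = [set v : V | forall i, v ord0 i \in `[0, c]] by [].
by apply/seteqP; split => x /= H i; [rewrite in_itv /= H | have := H i; rewrite in_itv].
Qed.

Lemma coord_cont i : continuous (fun x : V => x ord0 i).
Proof. exact: coord_continuous. Qed.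


Lemma sq_le_norm (h : V) i : h ord0 i * h ord0 i <= `|h| * `|h|.
Proof.
have -> : h ord0 i * h ord0 i = `|h ord0 i| * `|h ord0 i|.
  by rewrite -normrM ger0_norm // -expr2 sqr_ge0.
by apply: ler_pM => //; exact: norm_coord_le.
Qed.

Lemma sumsq_le (h : V) : \sum_i h ord0 i * h ord0 i <= d%:R * (`|h| * `|h|).
Proof.
apply: le_trans (_ : \sum_(i < d) (`|h| * `|h|) <= _).
  by apply: ler_sum => i _; exact: sq_le_norm.
by rewrite sumr_const card_ord mulr_natl.
Qed.

Lemma small_quad (k e : R) (h : V) : 0 <= k -> 0 < e ->
  `|h| < e / (k * d%:R + 1) -> k * \sum_i h ord0 i * h ord0 i <= e * `|h|.
Proof.
move=> k0 e0 hl.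
have kd0 : 0 < k * d%:R + 1 by rewrite ltr_pwDr // mulr_ge0.
apply: le_trans (_ : k * (d%:R * (`|h| * `|h|)) <= _).
  by apply: ler_wpM2l => //; exact: sumsq_le.
rewrite mulrA mulrA; apply: ler_wpM2r => //.
rewrite ltr_pdivlMr // in hl.
apply: le_trans (ltW hl); rewrite mulrA (mulrC (k * d%:R)) mulrDr mulr1.
by rewrite lerDl.
Qed.

Lemma superdiff_of (u : V -> R) (x p : V) (k : R) : 0 <= k -> orthant R d x ->
  (forall y, orthant R d y ->
     u y <= u x + dotv R d p (y - x) + k * \sum_i (y - x) ord0 i * (y - x) ord0 i) ->
  superdiff R d u x p.
Proof.
move=> k0 ox H e e0.
have kd0 : 0 < k * d%:R + 1 by rewrite ltr_pwDr // mulr_ge0.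
near=> y.
have oy : orthant R d y by near: y; exact: orthant_near.
apply: le_trans (H y oy) _; rewrite lerD2l; apply: small_quad => //.
near: y; apply/nbhs_ballP; exists (e / (k * d%:R + 1)) => /=.
  by rewrite divr_gt0.
by move=> y; rewrite -ball_normE /= distrC.
Unshelve. all: by end_near.
Qed.

Lemma subdiff_of (u : V -> R) (x p : V) (k : R) : 0 <= k -> orthant R d x ->
  (forall y, orthant R d y ->
     u x + dotv R d p (y - x) - k * \sum_i (y - x) ord0 i * (y - x) ord0 i <= u y) ->
  subdiff R d u x p.
Proof.
move=> k0 ox H e e0.
have kd0 : 0 < k * d%:R + 1 by rewrite ltr_pwDr // mulr_ge0.
near=> y.
have oy : orthant R d y by near: y; exact: orthant_near.
apply: le_trans (H y oy); rewrite lerD2l lerN2; apply: small_quad => //.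
near: y; apply/nbhs_ballP; exists (e / (k * d%:R + 1)) => /=.
  by rewrite divr_gt0.
by move=> y; rewrite -ball_normE /= distrC.
Unshelve. all: by end_near.
Qed.

Lemma Pen_x b (x x' y : V) : Pen b x y = Pen b x' y
  + dotv R d (\row_i (2 * (x' ord0 i - y ord0 i + b))) (x - x')
  + \sum_i (x - x') ord0 i * (x - x') ord0 i.
Proof.
rewrite /Pen /dotv -!big_split /=; apply: eq_bigr => i _; rewrite !mxE; ring.
Qed.

Lemma Pen_y b (x y y' : V) : Pen b x y = Pen b x y'
  - dotv R d (\row_i (2 * (x ord0 i - y' ord0 i + b))) (y - y')
  + \sum_i (y - y') ord0 i * (y - y') ord0 i.
Proof.
rewrite /Pen /dotv -sumrB -!big_split /=; apply: eq_bigr => i _; rewrite !mxE; ring.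
Qed.

Lemma usc_le (f : V -> R) x e δ : 0 < δ ->
  (forall y, orthant R d y -> `|x - y| < δ -> f y < f x + e) ->
  (usc_env R d f x <= (f x + e)%:E)%E.
Proof.
move=> d0 H.
have H1 : (usc_env R d f x <= ereal_sup [set (f y)%:E | y in orthant R d `&` ball x δ])%E.
  by apply: ereal_inf_lbound; exists δ.
apply: le_trans H1 _.
apply/ereal_supP => z [y [oy xy] <-]; move: xy; rewrite -ball_normE /= => xy.
by rewrite lee_fin ltW // H.
Qed.

Lemma lsc_ge (f : V -> R) x e δ : 0 < δ ->
  (forall y, orthant R d y -> `|x - y| < δ -> f x - e < f y) ->
  ((f x - e)%:E <= lsc_env R d f x)%E.
Proof.
move=> d0 H.
have H1 : (ereal_inf [set (f y)%:E | y in orthant R d `&` ball x δ] <= lsc_env R d f x)%E.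
  by apply: ereal_sup_ubound; exists δ.
apply: le_trans H1.
apply: le_ereal_inf_tmp => z [y [oy xy] <-]; move: xy; rewrite -ball_normE /= => xy.
by rewrite lee_fin ltW // H.
Qed.


Lemma Phi_cont (u v : V -> R) (A B : set V) (th k b : R) :
  {within A, continuous u} -> {within B, continuous v} ->
  {within A `*` B, continuous (fun z : V * V =>
     u z.1 - v z.2 - th * Ssum z.2 - k * Pen b z.1 z.2)}.
Proof.
move=> hu hv; apply/continuous_subspace_prodP => z _.
have c1 i : {for z, continuous (fun w : subspace A * subspace B => (w.1 : V) ord0 i)}.
  have h1 := (@fst_cont (subspace A) (subspace B) z).
  have h2 := (@incl_subspace_continuous _ A z.1).
  have h3 := (coord_cont i (z.1 : V)).
  have h4 := continuous_comp h2 h3.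
  exact: (continuous_comp h1 h4).
have c2 i : {for z, continuous (fun w : subspace A * subspace B => (w.2 : V) ord0 i)}.
  have h1 := (@snd_cont (subspace A) (subspace B) z).
  have h2 := (@incl_subspace_continuous _ B z.2).
  have h3 := (coord_cont i (z.2 : V)).
  have h4 := continuous_comp h2 h3.
  exact: (continuous_comp h1 h4).
have cu : {for z, continuous (fun w : subspace A * subspace B => u w.1)}.
  exact: (continuous_comp (@fst_cont (subspace A) (subspace B) z) (hu z.1)).
have cv : {for z, continuous (fun w : subspace A * subspace B => v w.2)}.
  exact: (continuous_comp (@snd_cont (subspace A) (subspace B) z) (hv z.2)).
apply: cvgB; [apply: cvgB; [apply: cvgB|]|].
- exact: cu.
- exact: cv.
- apply: cvgM; first exact: cvg_cst.
  apply: cvg_big => //; first exact: add_continuous.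
  by move=> i _; exact: c2.
- apply: cvgM; first exact: cvg_cst.
  apply: cvg_big => //; first exact: add_continuous.
  move=> i _; apply: cvgM; apply: cvgD; try exact: cvg_cst;
    by apply: cvgB; [exact: c1 | exact: c2].
Qed.


Lemma Pen_capx b c (x y : V) : (forall i, y ord0 i <= c + b) ->
  Pen b (capc c x) y <= Pen b x y.
Proof.
move=> H; apply: ler_sum => i _; rewrite /capc mxE.
have Hi := H i.
case: (leP (x ord0 i) c) => h //; nra.
Qed.

Lemma Pen_capy b c (x y : V) : (forall i, x ord0 i + b <= c) ->
  Pen b x (capc c y) <= Pen b x y.
Proof.
move=> H; apply: ler_sum => i _; rewrite /capc mxE.
have Hi := H i.
case: (leP (y ord0 i) c) => h //; nra.
Qed.

End S.

Lemma prod_shift (R : realType) n : forall (a : 'I_n.+1 -> R) t, 0 <= t ->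
  (forall i, 0 <= a i) -> \prod_i a i + t ^+ n.+1 <= \prod_i (a i + t).
Proof.
elim: n => [|n IH] a t t0 a0.
  by rewrite !big_ord1 expr1.
rewrite [\prod_(i < n.+2) a i]big_ord_recr [\prod_(i < n.+2) (a i + t)]big_ord_recr /=.
have := IH (fun i => a (widen_ord (leqnSn _) i)) t t0 (fun i => a0 _).
set A := \prod_(i < n.+1) a (widen_ord _ i).
set B := \prod_(i < n.+1) (a (widen_ord _ i) + t).
set c := a ord_max => AB.
have A0 : 0 <= A by apply: prodr_ge0 => i _; exact: a0.
have c0 : 0 <= c by exact: a0.
have T0 : 0 <= t ^+ n.+1 by exact: exprn_ge0.
apply: le_trans (_ : (A + t ^+ n.+1) * (c + t) <= _); last first.
  by apply: ler_wpM2r => //; rewrite addr_ge0.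
rewrite exprSr mulrDl !mulrDr.
have : 0 <= A * t by exact: mulr_ge0.
have : 0 <= t ^+ n.+1 * c by exact: mulr_ge0.
lra.
Qed.

Lemma prod_shift' (R : realType) d (a : 'I_d -> R) t : (0 < d)%N -> 0 <= t ->
  (forall i, 0 <= a i) -> \prod_i a i + t ^+ d <= \prod_i (a i + t).
Proof. by case: d a => // n a _; exact: prod_shift. Qed.

Arguments norm_coord_le {R d}.
Arguments norm_lt_coord {R d}.
Arguments orthant_near {R d}.
Arguments box_compact {R d}.
Arguments superdiff_of {R d}.
Arguments subdiff_of {R d}.
Arguments Pen_x {R d}.
Arguments Pen_y {R d}.
Arguments usc_le {R d}.
Arguments lsc_ge {R d}.
Arguments Phi_cont {R d}.
Arguments Pen_capx {R d}.
Arguments Pen_capy {R d}.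

Lemma sq_lt (R : realType) (a b : R) : 0 <= b -> a * a < b * b -> `|a| < b.
Proof.
move=> b0 ab; rewrite ltNge; apply/negP => ba.
have := ler_pM b0 b0 ba ba.
rewrite -normrM ger0_norm; last by rewrite -expr2 sqr_ge0.
by move/(lt_le_trans ab); rewrite ltxx.
Qed.

Lemma arL1 (R : realType) (a t : R) : 0 < a -> t <= a / 2 -> 0 < a - t.
Proof. move=> *; lra. Qed.

Lemma arL2 {R : realType} {vy va q k t : R} : 0 < t -> t * (2 * k) <= - q -> q < 0 ->
  va + - (t * q) - k * (t * t) <= vy -> vy <= va -> False.
Proof.
move=> t0 tq q0 H1 H2.
have h1 : 0 < - (q + k * t) by lra.
have := mulr_gt0 t0 h1.
lra.
Qed.

Lemma arL3 {R : realType} {fa fb P Q T e : R} : P <= fa + e -> fb - e <= Q ->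
  Q + T <= P -> fa - e < fb -> 3 * e = T -> False.
Proof. move=> *; lra. Qed.

Theorem theorem2p8 (R : realType) (d : nat) (f u v : 'rV[R]_d -> R) :
  (2 <= d)%N ->
  @unif_cont_on R d (orthant R d) f ->
  @supp R d f `<=` unit_cube R d ->
  {within corthant R d, continuous u} ->
  {within corthant R d, continuous v} ->
  @visc_sub R d f u ->
  @visc_super R d f v ->
  (forall x, orthant R d x -> u x = u (@cap1 R d x)) ->
  @pareto_monotone R d (corthant R d) v ->
  (forall x, borthant R d x -> u x <= v x) ->
  forall x, orthant R d x -> u x <= v x.
Proof.
move=> d2 hf _ hu hv hsub hsup hcap hmon hbd x0 ox0.
rewrite leNgt; apply/negP => lt0.
have d0 : (0 < d)%N by apply: leq_trans d2.
have dR : 0 < d%:R :> R by rewrite ltr0n.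
pose x1 := cap1 R d x0.
have ox1 : orthant R d x1 by move=> i; rewrite /x1 /cap1 mxE lt_min ox0 ltr01.
have bx1 : box R d 1 x1.
  move=> i; rewrite /x1 /cap1 mxE; apply/andP; split.
    by rewrite le_min ltW ?ox0 // ler01.
  by rewrite ge_min lexx orbT.
have ux1 : u x1 = u x0 by rewrite (hcap x0 ox0).
have cx0 : corthant R d x0 by move=> i; exact: ltW.
have cx1 : corthant R d x1 by move=> i; exact: ltW.
have vx1 : v x1 <= v x0.
  by apply: hmon => // i; rewrite /x1 /cap1 mxE ge_min lexx.
pose g := u x1 - v x1.
have g0 : 0 < g by rewrite /g ux1; lra.
pose th := g / (8 * d%:R).
have th0 : 0 < th by rewrite /th divr_gt0 // mulr_gt0.
pose e := th ^+ d / 3.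
have e0 : 0 < e by rewrite /e divr_gt0 // exprn_gt0.
have [df df0 Hf] := hf e e0.
have [r r0 Hr] : exists2 r, 0 < r &
    forall y, corthant R d y -> `|x1 - y| < r -> v y < v x1 + g / 4.
  have /subspace_continuousP hv' := hv.
  have := hv' x1 cx1; move/cvgrPdist_lt => /(_ (g / 4)).
  rewrite divr_gt0 // => /(_ isT).
  move=> /nbhs_ballP [r r0 Hr]; exists r => // y cy xy.
  have := Hr y; rewrite -ball_normE /= => /(_ xy cy).
  by rewrite ltr_distlC => /andP[_].
pose b := Num.min (Num.min 1 (df / 2)) (r / 2).
have b0 : 0 < b by rewrite /b !lt_min ltr01 !divr_gt0.
have b1 : b <= 1 by rewrite /b !ge_min lexx.
have bdf : b <= df / 2 by rewrite /b !ge_min lexx orbT.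
have br : b < r.
  apply: (le_lt_trans (_ : b <= r / 2)); first by rewrite /b ge_min lexx orbT.
  by rewrite ltr_pdivrMr // ltr_pMr // ltr1n.
pose c := 1 + b.
pose x1b := x1 + const_mx b.
have x1bE i : x1b ord0 i = x1 ord0 i + b by rewrite !mxE.
have bx1b : box R d c x1b.
  move=> i; rewrite x1bE; have := bx1 i => /andP[h1 h2].
  by apply/andP; split; rewrite /c; lra.
have cx1b : corthant R d x1b by move=> i; have := bx1b i => /andP[].
have vx1b : v x1b < v x1 + g / 4.
  apply: Hr => //; apply: norm_lt_coord => // i.
  rewrite !mxE opprD addrA subrr add0r normrN ger0_norm //; exact: ltW.
have cb1 : box R d 1 `<=` corthant R d by move=> y H i; have := H i => /andP[].
have cbc : box R d c `<=` corthant R d by move=> y H i; have := H i => /andP[].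
have [xu xuin xumax] : exists2 xu, xu \in box R d 1 &
    forall t, t \in box R d 1 -> u t <= u xu.
  apply: compact_EVT_max; first by exists x1.
    exact: box_compact.
  exact: continuous_subspaceW cb1 hu.
have ub y : box R d 1 y -> u y <= u xu by move=> H; apply: xumax; rewrite inE.
pose C := Num.max (u xu - v 0) 0 + 1.
have C0 : 0 < C by rewrite /C ltr_pwDr // le_max lexx orbT.
have CU : u xu - v 0 < C by rewrite /C ltr_pwDr // le_max lexx.
pose k := C / (b * b) + 1.
have bb0 : 0 < b * b by rewrite mulr_gt0.
have k0 : 0 < k by rewrite /k ltr_pwDr // divr_ge0 // ltW.
have kC : C < k * (b * b).
  by rewrite /k mulrDl mul1r divfK ?gt_eqF // ltrDl.
pose Phi := fun z : 'rV[R]_d * 'rV[R]_d =>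
  u z.1 - v z.2 - th * Ssum R d z.2 - k * Pen R d b z.1 z.2.
have [z zin zmax] : exists2 z, z \in box R d 1 `*` box R d c &
    forall t, t \in box R d 1 `*` box R d c -> Phi t <= Phi z.
  apply: compact_EVT_max; first by exists (x1, x1b).
    by apply: compact_setX; exact: box_compact.
  apply: Phi_cont; [exact: continuous_subspaceW cb1 hu | exact: continuous_subspaceW cbc hv].
have Dmax y1 y2 : box R d 1 y1 -> box R d c y2 -> Phi (y1, y2) <= Phi z.
  by move=> h1 h2; apply: zmax; rewrite inE.
move: zin; rewrite inE; case: z zmax Dmax => xa ya zmax Dmax [bxa bya] /=.
clear zmax.
have PhiE y1 y2 : Phi (y1, y2) =
  u y1 - v y2 - th * Ssum R d y2 - k * Pen R d b y1 y2 by [].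
have Pen0 : Pen R d b x1 x1b = 0.
  by rewrite /Pen big1 // => i _; rewrite x1bE; ring.
have Sx1b : th * Ssum R d x1b <= g / 4.
  have -> : g / 4 = th * (2 * d%:R) by rewrite /th; field; rewrite gt_eqF.
  apply: ler_wpM2l; first exact: ltW.
  apply: le_trans (_ : \sum_(i < d) (2 : R) <= _).
    apply: ler_sum => i _; rewrite x1bE; have := bx1 i => /andP[_ h]; lra.
  by rewrite sumr_const card_ord mulr_natr.
have Phi_lb : g / 2 < Phi (xa, ya).
  apply: lt_le_trans (Dmax _ _ bx1 bx1b); rewrite PhiE Pen0 mulr0 subr0.
  rewrite /g in vx1b Sx1b *; lra.
have cxa : corthant R d xa by exact: cb1.
have cya : corthant R d ya by exact: cbc.
have S0 y : corthant R d y -> 0 <= Ssum R d y by move=> H; apply: sumr_ge0 => i _.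
have Pge0 y1 y2 : 0 <= Pen R d b y1 y2.
  by apply: sumr_ge0 => i _; rewrite -expr2 sqr_ge0.
have c0 : corthant R d 0 by move=> i; rewrite mxE.
have v0ya : v 0 <= v ya by apply: hmon => // i; rewrite mxE; exact: cya.
have kP : k * Pen R d b xa ya < k * (b * b).
  apply: lt_trans kC; have := ub _ bxa; have := S0 _ cya.
  rewrite PhiE in Phi_lb.
  have : 0 <= th * Ssum R d ya by apply: mulr_ge0; [exact: ltW | exact: S0].
  lra.
have Pbb : Pen R d b xa ya < b * b by rewrite -(ltr_pM2l k0).
pose a i := xa ord0 i - ya ord0 i + b.
have aP i : `|a i| < b.
  apply: sq_lt; first exact: ltW.
  apply: le_lt_trans Pbb; rewrite /Pen (bigD1 i) //= lerDl.
  by apply: sumr_ge0 => j _; rewrite -expr2 sqr_ge0.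
have xya i : xa ord0 i < ya ord0 i.
  by have := aP i; rewrite ltr_norml /a => /andP[_]; lra.
have xydf : `|xa - ya| < df.
  apply: norm_lt_coord => // i; rewrite !mxE.
  have := aP i; rewrite ltr_norml /a => /andP[h1 h2].
  rewrite ltr_norml; apply/andP; split; lra.
have oya : orthant R d ya.
  by move=> i; apply: le_lt_trans (xya i); have := bxa i => /andP[].
have oxa : orthant R d xa.
  apply: contrapT => noxa.
  have bxa' : borthant R d xa by split.
  have := hbd _ bxa'.
  have : v xa <= v ya by apply: hmon => // i; exact: ltW.
  rewrite PhiE in Phi_lb.
  have : 0 <= th * Ssum R d ya by apply: mulr_ge0; [exact: ltW | exact: S0].
  have : 0 <= k * Pen R d b xa ya by rewrite mulr_ge0 // ltW.
  lra.
pose p := \row_i (k * (2 * a i)).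
pose q := \row_i (p ord0 i - th).
pose w2 := \row_i (2 * (xa ord0 i - ya ord0 i + b)) : 'rV[R]_d.
have kdot h : k * dotv R d w2 h = dotv R d p h.
  by rewrite /dotv mulr_sumr; apply: eq_bigr => i _; rewrite !mxE /a; ring.
have qdot h : dotv R d q h = k * dotv R d w2 h - th * \sum_i h ord0 i.
  rewrite kdot /dotv mulr_sumr -sumrB; apply: eq_bigr => i _; rewrite !mxE; ring.
have Hsup : superdiff R d u xa p.
  apply: (superdiff_of u xa p k) => //; first exact: ltW.
  move=> y oy.
  have cy1 : box R d 1 (capc R d 1 y).
    move=> i; rewrite /capc mxE; apply/andP; split.
      by rewrite le_min ltW ?oy // ler01.
    by rewrite ge_min lexx orbT.
  have := Dmax _ _ cy1 bya; rewrite !PhiE.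
  have Pc := Pen_capx b 1 y ya (fun i => proj2 (andP (bya i))).
  have kPc : k * Pen R d b (capc R d 1 y) ya <= k * Pen R d b y ya.
    by apply: ler_wpM2l => //; exact: ltW.
  have PE : k * Pen R d b y ya = k * Pen R d b xa ya + dotv R d p (y - xa)
      + k * \sum_i (y - xa) ord0 i * (y - xa) ord0 i.
    by rewrite (Pen_x b y xa ya) -/w2 !mulrDr kdot.
  have -> : u y = u (capc R d 1 y) by exact: hcap.
  lra.
have Hy y : orthant R d y -> v ya + dotv R d q (y - ya)
    - k * \sum_i (y - ya) ord0 i * (y - ya) ord0 i <= v y.
  move=> oy.
  have cy : corthant R d y by move=> i; exact: ltW.
  have bcy : box R d c (capc R d c y).
    move=> i; rewrite /capc mxE; apply/andP; split.
      by rewrite le_min ltW ?oy // /c; lra.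
    by rewrite ge_min lexx orbT.
  have := Dmax _ _ bxa bcy; rewrite !PhiE.
  have vc : v (capc R d c y) <= v y.
    by apply: hmon => // [|i]; [exact: cbc | rewrite /capc mxE ge_min lexx].
  have Sc : th * Ssum R d (capc R d c y) <= th * Ssum R d y.
    apply: ler_wpM2l; first exact: ltW.
    by apply: ler_sum => i _; rewrite /capc mxE ge_min lexx.
  have kPc : k * Pen R d b xa (capc R d c y) <= k * Pen R d b xa y.
    apply: ler_wpM2l; first exact: ltW.
    by apply: Pen_capy => i; have := bxa i => /andP[_ h]; rewrite /c; lra.
  have PE : k * Pen R d b xa y = k * Pen R d b xa ya - k * dotv R d w2 (y - ya)
      + k * \sum_i (y - ya) ord0 i * (y - ya) ord0 i.
    by rewrite (Pen_y b xa y ya) -/w2 mulrDr mulrBr.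
  have SE : th * Ssum R d y = th * Ssum R d ya + th * \sum_i (y - ya) ord0 i.
    have -> : \sum_i (y - ya) ord0 i = Ssum R d y - Ssum R d ya.
      by rewrite /Ssum -sumrB; apply: eq_bigr => i _; rewrite !mxE.
    ring.
  rewrite qdot; lra.
have Hsub : subdiff R d v ya q.
  by apply: (subdiff_of v ya q k) => //; exact: ltW.
have qge0 i : 0 <= q ord0 i.
  rewrite leNgt; apply/negP => qi.
  pose t := Num.min (ya ord0 i / 2) (- q ord0 i / (2 * k)).
  have k2 : 0 < 2 * k by rewrite mulr_gt0.
  have t0 : 0 < t by rewrite /t lt_min !divr_gt0 // ?oya // oppr_gt0.
  have tya : t <= ya ord0 i / 2 by rewrite /t ge_min lexx.
  have tq : t * (2 * k) <= - q ord0 i.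
    by rewrite -ler_pdivlMr // /t ge_min lexx orbT.
  pose y := ya - \row_j (t * (j == i)%:R).
  have yE j : (y - ya) ord0 j = - (t * (j == i)%:R) by rewrite !mxE; ring.
  have oy : orthant R d y.
    move=> j; rewrite !mxE; case: (eqVneq j i) => [->|ne].
      by rewrite mulr1; apply: arL1 => //; exact: oya.
    by rewrite mulr0 subr0; exact: oya.
  have vy : v y <= v ya.
    apply: hmon => // [|j]; first by move=> j; exact: ltW.
    by rewrite !mxE lerBlDr lerDl mulr_ge0 ?ler0n // ltW.
  have := Hy y oy.
  have -> : dotv R d q (y - ya) = - (t * q ord0 i).
    rewrite /dotv (bigD1 i) //= big1 ?addr0 => [|j ji]; rewrite yE.
      by rewrite eqxx mulr1 mulrN mulrC.
    by rewrite (negbTE ji) mulr0 oppr0 mulr0.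
  have -> : \sum_i (y - ya) ord0 i * (y - ya) ord0 i = t * t.
    rewrite (bigD1 i) //= big1 ?addr0 => [|j ji]; rewrite yE.
      by rewrite eqxx mulr1 mulrNN.
    by rewrite (negbTE ji) mulr0 oppr0 mulr0.
  by move=> H; exact: (arL2 t0 tq qi H vy).
have hp : \prod_i p ord0 i <= f xa + e.
  rewrite -lee_fin; apply: le_trans (hsub xa p oxa Hsup) _.
  apply: (usc_le f xa e df) => // y oy xy.
  by have := Hf xa y oxa oy xy; rewrite ltr_distlC => /andP[_].
have hq : f ya - e <= \prod_i q ord0 i.
  rewrite -lee_fin; apply: le_trans _ (hsup ya q oya Hsub).
  apply: (lsc_ge f ya e df) => // y oy xy.
  by have := Hf ya y oya oy xy; rewrite ltr_distlC => /andP[].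
have pq : \prod_i q ord0 i + th ^+ d <= \prod_i p ord0 i.
  have -> : \prod_i p ord0 i = \prod_i (q ord0 i + th).
    by apply: eq_bigr => i _; rewrite /q mxE subrK.
  exact: prod_shift' (ltW th0) qge0.
have := Hf xa ya oxa oya xydf; rewrite ltr_distlC => /andP[h1 h2].
have e3 : 3 * e = th ^+ d by rewrite /e; field.
exact: (arL3 hp hq pq h1 e3).
Qed.
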